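(* Under the assumptions of the convergence setting (loss $0\le\ell\le A$; some $\theta^*$ and $\delta^*>0$ with $\theta^*\cdot\phi^t_{\Delta y}\ge\delta^*$ for all $t$ and $y\in\mathcal{Y}^t$), assume further that $\|\phi(x_t,y)\|_2\le R$ for all $t$ and all $y\in\mathcal{Y}(x_t)$. Then the cumulative hinge loss of the online learning framework satisfies $$\sum_{t=1}^T\mathcal{H}_{\delta_t}(\theta_t,(x_t,y_t))\le 8A\left(\frac{R\|\theta^*\|}{\delta^*}\right)^2.$$
   Context: Each example consists of an input $x_t$ with a finite set $\mathcal{Y}(x_t)$ of feasible outputs and a correct output $y_t\in\mathcal{Y}(x_t)$; a feature map $\phi(x,y)\in\mathbb{R}^F$ is given. Write $\mathcal{Y}^t=\mathcal{Y}(x_t)\setminus\{y_t\}$ and $\phi^t_{\Delta y}=\phi(x_t,y_t)-\phi(x_t,y)$. The framework: $\theta_1=0$; for $t=1,\dots,T$: predict $\hat y_t\in\arg\max_{y\in\mathcal{Y}(x_t)}\theta_t\cdot\phi(x_t,y)$, suffer loss $\delta_t=\ell(y_t,\hat y_t)$, and set $\theta_{t+1}=\arg\min_{\theta'}\|\theta'-\theta_t\|_2^2$ subject to $\theta'\cdot\phi^t_{\Delta y}\ge\delta_t$ for all $y\in\mathcal{Y}^t$. The hinge loss is $\mathcal{H}_{\delta_t}(\theta_t,(x_t,y_t))=\max\bigl(0,\max_{y\in\mathcal{Y}^t}(\delta_t-\theta_t\cdot\phi^t_{\Delta y})\bigr)$. All norms are Euclidean. *)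

(* Defs.v *)
From HB Require Import structures.
From mathcomp Require Import all_boot all_order all_algebra.
Set Implicit Arguments. Unset Strict Implicit. Unset Printing Implicit Defensive.
Import Order.TTheory GRing.Theory Num.Theory.
Local Open Scope ring_scope.

Definition dot (R : rcfType) (F : nat) (u v : 'rV[R]_F) : R :=
  \sum_(i < F) u 0 i * v 0 i.

Definition norm2 (R : rcfType) (F : nat) (u : 'rV[R]_F) : R :=
  Num.sqrt (dot u u).

Definition phiDelta (R : rcfType) (F : nat) (X : Type) (Y : Type)
  (phi : X -> Y -> 'rV[R]_F) (x : X) (yt y : Y) : 'rV[R]_F :=
  phi x yt - phi x y.

Definition hinge (R : rcfType) (F : nat) (X : Type) (Y : eqType)
  (Ys : X -> seq Y) (phi : X -> Y -> 'rV[R]_F)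
  (dt : R) (th : 'rV[R]_F) (x : X) (yt : Y) : R :=
  \big[Num.max/0]_(y <- Ys x | y != yt) (dt - dot th (phiDelta phi x yt y)).

(* Main.v *)
Require Import Defs.
From HB Require Import structures.
From mathcomp Require Import all_boot all_order all_algebra.
From mathcomp Require Import ring lra.
Import Order.TTheory GRing.Theory Num.Theory.
Local Open Scope ring_scope.
Set Implicit Arguments. Unset Strict Implicit.

Section DotLemmas.
Variables (R : rcfType) (F : nat).
Implicit Types (a b c : 'rV[R]_F) (k : R).

Lemma dotC a b : dot a b = dot b a.
Proof. by rewrite /dot; apply: eq_bigr => i _; rewrite mulrC. Qed.
Lemma dotDl a b c : dot (a + b) c = dot a c + dot b c.
Proof. by rewrite /dot -big_split; apply: eq_bigr => i _; rewrite !mxE mulrDl. Qed.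
Lemma dotDr a b c : dot c (a + b) = dot c a + dot c b.
Proof. by rewrite dotC dotDl !(dotC c). Qed.
Lemma dotZl k a b : dot (k *: a) b = k * dot a b.
Proof. by rewrite /dot mulr_sumr; apply: eq_bigr => i _; rewrite !mxE mulrA. Qed.
Lemma dotZr k a b : dot b (k *: a) = k * dot b a.
Proof. by rewrite dotC dotZl dotC. Qed.
Lemma dotNl a b : dot (- a) b = - dot a b.
Proof. by rewrite -scaleN1r dotZl mulN1r. Qed.
Lemma dotNr a b : dot b (- a) = - dot b a.
Proof. by rewrite dotC dotNl dotC. Qed.
Lemma dotBl a b c : dot (a - b) c = dot a c - dot b c.
Proof. by rewrite dotDl dotNl. Qed.
Lemma dotBr a b c : dot c (a - b) = dot c a - dot c b.
Proof. by rewrite dotDr dotNr. Qed.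
Lemma dot0l a : dot 0 a = 0.
Proof. by rewrite /dot big1 // => i _; rewrite mxE mul0r. Qed.
Lemma dot_ge0 a : 0 <= dot a a.
Proof. by rewrite /dot sumr_ge0 // => i _; rewrite -expr2 sqr_ge0. Qed.
Lemma dot_eq0 a : dot a a = 0 -> a = 0.
Proof.
move=> h; apply/rowP => i; rewrite mxE.
have hp : forall j : 'I_F, xpredT j -> 0 <= a 0 j * a 0 j.
  by move=> j _; rewrite -expr2 sqr_ge0.
have := psumr_eq0P hp h (i := i) isT.
by move/eqP; rewrite mulf_eq0 orbb => /eqP.
Qed.
Lemma norm2_sq a : norm2 a ^+ 2 = dot a a.
Proof. by rewrite /norm2 sqr_sqrtr // dot_ge0. Qed.
Lemma norm2_ge0 a : 0 <= norm2 a.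
Proof. exact: sqrtr_ge0. Qed.

Lemma cs_sq a b : dot a b ^+ 2 <= dot a a * dot b b.
Proof.
have [bb0|bbn0] := eqVneq (dot b b) 0.
  by move/dot_eq0: (bb0) => ->; rewrite dotC !dot0l expr2 !mulr0.
have bbp : 0 < dot b b by rewrite lt_def bbn0 dot_ge0.
set l := dot a b / dot b b.
have := dot_ge0 (a - l *: b).
rewrite !(dotBl, dotBr, dotZl, dotZr) (dotC b a) /l => h.
move: h; set aa := dot a a; set ab := dot a b; set bb := dot b b => h.
have e : (aa * bb - ab ^+ 2) / bb = aa - ab / bb * ab - ab / bb * (ab - ab / bb * bb).
  by field; rewrite /bb.
rewrite -e ler_pdivlMr // mul0r in h; lra.
Qed.

Lemma cs a b : `|dot a b| <= norm2 a * norm2 b.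
Proof.
rewrite -(ler_pXn2r (n:=2)) //; last by rewrite nnegrE mulr_ge0 ?norm2_ge0.
  by rewrite real_normK ?num_real // exprMn !norm2_sq cs_sq.
by rewrite nnegrE normr_ge0.
Qed.
End DotLemmas.

Section Step.
Variables (R : rcfType) (F : nat) (Y : eqType).
Implicit Types (th u z w : 'rV[R]_F).

Definition feas (d : R) (Q : pred Y) (g : Y -> 'rV[R]_F) w :=
  forall y, Q y -> d <= dot w (g y).

Lemma dot_expand (D v : 'rV[R]_F) (s : R) :
  dot (D + s *: v) (D + s *: v) = dot D D + 2 * s * dot D v + s ^+ 2 * dot v v.
Proof. rewrite !(dotDl, dotDr, dotZl, dotZr) (dotC v D); ring. Qed.

Lemma proj d Q g th th' z :
  feas d Q g th' -> feas d Q g z ->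
  (forall w, feas d Q g w -> dot (th' - th) (th' - th) <= dot (w - th) (w - th)) ->
  0 <= dot (th' - th) (z - th').
Proof.
move=> f1 f2 hmin.
set D := th' - th; set v := z - th'.
rewrite leNgt; apply/negP => ha.
set a := dot D v in ha; set b := dot v v.
have hb : 0 <= b := dot_ge0 v.
have hba : 0 < b - a by lra.
set s := - a / (b - a).
have hs0 : 0 < s by rewrite /s divr_gt0 //; lra.
have hsb : s * (b - a) = - a by rewrite /s mulfVK //; lra.
have hs1 : s <= 1 by rewrite /s ler_pdivrMr //; lra.
have fw : feas d Q g (th' + s *: v).
  move=> y Qy; rewrite dotDl dotZl /v dotBl.
  have := f1 y Qy; have := f2 y Qy; nra.
have := hmin _ fw.
have -> : th' + s *: v - th = D + s *: v by rewrite /D addrAC.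
rewrite dot_expand -/a -/b => h.
nra.
Qed.

Lemma step d Q g th th' u m K :
  feas d Q g th' ->
  (forall w, feas d Q g w -> dot (th' - th) (th' - th) <= dot (w - th) (w - th)) ->
  0 <= m -> 0 <= K ->
  (forall y, Q y -> d + m <= dot u (g y)) ->
  (forall y v, Q y -> `|dot v (g y)| <= K * norm2 v) ->
  dot (th' - u) (th' - u) <= dot (th - u) (th - u) /\
  forall y, Q y -> 2 * m * (d - dot th (g y)) <=
     K ^+ 2 * (dot (th - u) (th - u) - dot (th' - u) (th' - u)).
Proof.
move=> f1 hmin hm hK hu hg.
set D := th' - th.
have iden : dot (th - u) (th - u) - dot (th' - u) (th' - u)
    = 2 * dot D (u - th') + dot D D.
  rewrite /D !(dotBl, dotBr) (dotC u th) (dotC u th') (dotC th th'); ring.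
have fu : feas d Q g u by move=> y Qy; have := hu y Qy; lra.
have p0 := proj f1 fu hmin; rewrite -/D in p0.
have hdd := dot_ge0 D.
split; first by lra.
move=> y Qy.
set n := norm2 D.
have hn : 0 <= n := norm2_ge0 D.
have hnn : n ^+ 2 = dot D D := norm2_sq D.
have ht : d - dot th (g y) <= K * n.
  have e : dot D (g y) = dot th' (g y) - dot th (g y) by rewrite /D dotBl.
  have := f1 y Qy; have := hg y D Qy; rewrite -/n e.
  move=> h1 h2; have := ler_norm (dot th' (g y) - dot th (g y)); lra.
rewrite iden.
have hKn : 0 <= K * n by apply: mulr_ge0.
have [Kn0|Knp'] := eqVneq (K * n) 0.
  have : 2 * m * (d - dot th (g y)) <= 0 by nra.
  have : 0 <= K ^+ 2 * (2 * dot D (u - th') + dot D D).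
    by apply: mulr_ge0; [apply: sqr_ge0|lra].
  lra.
have Knp : 0 < K * n by rewrite lt_def Knp' hKn.
set k := m / (K * n).
have hk : k * (K * n) = m by rewrite /k mulfVK //; rewrite gt_eqF.
have hk0 : 0 <= k by rewrite /k divr_ge0 // ltW.
have fz : feas d Q g (u - k *: D).
  move=> y' Qy'; rewrite dotBl dotZl.
  have := hu y' Qy'; have := hg y' D Qy'; rewrite -/n => h1 h2.
  have := ler_norm (dot D (g y')).
  have : k * dot D (g y') <= k * (K * n).
    apply: ler_wpM2l => //; have := ler_norm (dot D (g y')); lra.
  lra.
have := proj f1 fz hmin; rewrite -/D.
have -> : u - k *: D - th' = (u - th') - k *: D by rewrite addrAC.
rewrite [dot D (u - th' - _)]dotBr dotZr => hp.
have hP : k * n ^+ 2 <= dot D (u - th') by rewrite hnn; lra.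
nra.
Qed.
End Step.

Lemma bigmax_le (R : rcfType) (Y : eqType) (s : seq Y) (P : pred Y) (f : Y -> R) c :
  0 <= c -> (forall y, y \in s -> P y -> f y <= c) ->
  \big[Num.max/0]_(y <- s | P y) f y <= c.
Proof.
move=> c0 h; rewrite big_seq_cond; elim/big_ind: _ => //.
  by move=> a b ha hb; rewrite ge_max ha hb.
by move=> i /andP[]; apply: h.
Qed.

Unset Implicit Arguments. Set Strict Implicit.

Theorem theorem2
  (R : rcfType) (F : nat) (X : Type) (Y : eqType)
  (Ys : X -> seq Y) (phi : X -> Y -> 'rV[R]_F) (loss : Y -> Y -> R) (A : R)
  (T : nat) (x : nat -> X) (y : nat -> Y) (yhat : nat -> Y)
  (theta : nat -> 'rV[R]_F)
  (theta_star : 'rV[R]_F) (delta_star : R) (Rb : R)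
  (hloss : forall a b : Y, 0 <= loss a b <= A)
  (hy : forall t, (1 <= t <= T)%N -> y t \in Ys (x t))
  (h0 : theta 1%N = 0)
  (hpred_in : forall t, (1 <= t <= T)%N -> yhat t \in Ys (x t))
  (hpred_max : forall t, (1 <= t <= T)%N -> forall y', y' \in Ys (x t) ->
       dot (theta t) (phi (x t) y') <= dot (theta t) (phi (x t) (yhat t)))
  (hupd_feas : forall t, (1 <= t <= T)%N -> forall y', y' \in Ys (x t) -> y' != y t ->
       loss (y t) (yhat t) <= dot (theta t.+1) (phiDelta phi (x t) (y t) y'))
  (hupd_min : forall t, (1 <= t <= T)%N -> forall th' : 'rV[R]_F,
       (forall y', y' \in Ys (x t) -> y' != y t ->
          loss (y t) (yhat t) <= dot th' (phiDelta phi (x t) (y t) y')) ->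
       norm2 (theta t.+1 - theta t) ^+ 2 <= norm2 (th' - theta t) ^+ 2)
  (hdstar : 0 < delta_star)
  (hsep : forall t, (1 <= t <= T)%N -> forall y', y' \in Ys (x t) -> y' != y t ->
       delta_star <= dot theta_star (phiDelta phi (x t) (y t) y'))
  (hR : forall t, (1 <= t <= T)%N -> forall y', y' \in Ys (x t) ->
       norm2 (phi (x t) y') <= Rb) :
  \sum_(1 <= t < T.+1) hinge Ys phi (loss (y t) (yhat t)) (theta t) (x t) (y t)
    <= 8 * A * (Rb * norm2 theta_star / delta_star) ^+ 2.
Proof.
have A0 : 0 <= A by case/andP: (hloss (y 0%N) (y 0%N)) => h1 h2; lra.
pose Q t := fun y' => (y' \in Ys (x t)) && (y' != y t).
pose g t := phiDelta phi (x t) (y t).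
have f1 : forall t, (1 <= t <= T)%N -> feas (loss (y t) (yhat t)) (Q t) (g t) (theta t.+1).
  by move=> t ht y' /andP[h1 h2]; apply: hupd_feas.
have hmin : forall t, (1 <= t <= T)%N -> forall w,
    feas (loss (y t) (yhat t)) (Q t) (g t) w ->
    dot (theta t.+1 - theta t) (theta t.+1 - theta t) <= dot (w - theta t) (w - theta t).
  move=> t ht w fw; rewrite -!norm2_sq; apply: hupd_min => // y' h1 h2.
  by apply: fw; rewrite /Q h1 h2.
have [Az|Ap'] := eqVneq A 0.
  have th0 : forall t, (1 <= t <= T.+1)%N -> theta t = 0.
    elim=> [//|t IH] /andP[_ ht].
    have [->//|tp] := posnP t.
    have ht' : (1 <= t <= T)%N by rewrite tp -ltnS.
    have e : theta t = 0 by apply: IH; by rewrite tp /= ltnW.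
    have f0 : feas (loss (y t) (yhat t)) (Q t) (g t) 0.
      by move=> y' _; rewrite dot0l; case/andP: (hloss (y t) (yhat t)); rewrite Az.
    have := hmin t ht' 0 f0; rewrite e !subr0 dot0l => h.
    by apply: dot_eq0; apply/eqP; rewrite eq_le h dot_ge0.
  rewrite Az mulr0 mul0r big_nat; apply: sumr_le0 => t /andP[h1 h2].
  rewrite /hinge th0 ?h1 ?(ltnW h2) //.
  apply: bigmax_le => // y' _ _; rewrite dot0l subr0.
  by case/andP: (hloss (y t) (yhat t)); rewrite Az.
have Ap : 0 < A by rewrite lt_def Ap' A0.
set u := (2 * A / delta_star) *: theta_star.
set K := 2 * Rb.
pose Phi t := dot (theta t - u) (theta t - u).
have key : forall t, (1 <= t <= T)%N ->
    hinge Ys phi (loss (y t) (yhat t)) (theta t) (x t) (y t)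
      <= K ^+ 2 / (2 * A) * (Phi t - Phi t.+1).
  move=> t ht.
  have hRb : 0 <= Rb by apply: le_trans (hR t ht _ (hy t ht)); apply: norm2_ge0.
  have hK : 0 <= K by rewrite /K; lra.
  have hu : forall y', Q t y' -> loss (y t) (yhat t) + A <= dot u (g t y').
    move=> y' /andP[h1 h2]; rewrite /u dotZl.
    have := hsep t ht y' h1 h2; rewrite -/(g t y') => hs.
    have : 2 * A / delta_star * delta_star <= 2 * A / delta_star * dot theta_star (g t y').
      by apply: ler_wpM2l => //; apply: divr_ge0 => //; [lra|apply: ltW].
    rewrite divfK; last by rewrite gt_eqF.
    by case/andP: (hloss (y t) (yhat t)); lra.
  have hg : forall y' v, Q t y' -> `|dot v (g t y')| <= K * norm2 v.
    move=> y' v /andP[h1 h2]; rewrite /g /phiDelta dotBr.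
    have c1 := cs v (phi (x t) (y t)); have c2 := cs v (phi (x t) y').
    have n1 := hR t ht _ (hy t ht); have n2 := hR t ht _ h1.
    have nv := norm2_ge0 v.
    have e1 : norm2 v * norm2 (phi (x t) (y t)) <= norm2 v * Rb by apply: ler_wpM2l.
    have e2 : norm2 v * norm2 (phi (x t) y') <= norm2 v * Rb by apply: ler_wpM2l.
    have := ler_normB (dot v (phi (x t) (y t))) (dot v (phi (x t) y')).
    rewrite /K; lra.
  have [s1 s2] := step (f1 t ht) (hmin t ht) (ltW Ap) hK hu hg.
  apply: bigmax_le.
    apply: mulr_ge0; first by apply: divr_ge0; [apply: sqr_ge0|lra].
    rewrite /Phi; lra.
  move=> y' h1 h2.
  have := s2 y' (introT andP (conj h1 h2)); rewrite -/(g t y') -/(Phi t) -/(Phi t.+1) => h.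
  rewrite mulrAC ler_pdivlMr; last lra.
  rewrite /g in h; lra.
apply: le_trans (_ : \sum_(1 <= t < T.+1) K ^+ 2 / (2 * A) * (Phi t - Phi t.+1) <= _).
  rewrite !big_nat; apply: ler_sum => t /andP[h1 h2]; apply: key.
  by rewrite h1 -ltnS.
rewrite -mulr_sumr.
have -> : \sum_(1 <= t < T.+1) (Phi t - Phi t.+1) = - \sum_(1 <= t < T.+1) (Phi t.+1 - Phi t).
  by rewrite -sumrN; apply: eq_bigr => t _; rewrite opprB.
rewrite telescope_sumr // opprB.
have hPT := dot_ge0 (theta T.+1 - u).
have e : Phi 1%N = (2 * A / delta_star) ^+ 2 * norm2 theta_star ^+ 2.
  by rewrite /Phi h0 sub0r dotNl dotNr opprK /u dotZl dotZr norm2_sq; ring.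
rewrite e.
have hKA : 0 <= K ^+ 2 / (2 * A) by apply: divr_ge0; [apply: sqr_ge0|lra].
apply: le_trans (_ : K ^+ 2 / (2 * A) * ((2 * A / delta_star) ^+ 2 * norm2 theta_star ^+ 2) <= _).
  apply: ler_wpM2l => //; rewrite /Phi; lra.
rewrite le_eqVlt; apply/orP; left; apply/eqP.
rewrite /K; field; rewrite ?gt_eqF //; lra.
Qed.
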